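(* Let $\sigma>0$, $\lambda_1,\lambda_2>0$, $m_g\ge1$. Suppose $\boldsymbol\beta_g\mid\tau_{g1}^2,\dots,\tau_{gm_g}^2,\gamma_g^2,\sigma^2\sim N_{m_g}(\mathbf 0,\sigma^2\mathbf V_g)$ with $\mathbf V_g=\mathrm{diag}\{(\tau_{gj}^{-2}+\gamma_g^{-2})^{-1}, j=1,\dots,m_g\}$, and $(\tau_{g1}^2,\dots,\tau_{gm_g}^2,\gamma_g^2)\in(0,\infty)^{m_g+1}$ has density $$\pi(\tau^2_{g1},\dots,\tau^2_{gm_g},\gamma^2_g)=c_g(\lambda_1^2,\lambda_2^2)\prod_{j=1}^{m_g}\Big[(\tau^2_{gj})^{-1/2}\Big(\frac1{\tau^2_{gj}}+\frac1{\gamma^2_g}\Big)^{-1/2}\Big](\gamma_g^2)^{-1/2}\exp\Big\{-\frac{\lambda_1^2}{2}\sum_{j=1}^{m_g}\tau^2_{gj}-\frac{\lambda_2^2}{2}\gamma_g^2\Big\}.$$ Then this density is integrable (so a normalizing constant $c_g(\lambda_1^2,\lambda_2^2)\in(0,\infty)$ exists, i.e., the prior is proper), and the marginal prior of $\boldsymbol\beta_g$ satisfies $$\pi(\boldsymbol\beta_g\mid\sigma^2)\propto\exp\Big\{-\frac{\lambda_1}{\sigma}\|\boldsymbol\beta_g\|_1-\frac{\lambda_2}{\sigma}\|\boldsymbol\beta_g\|_2\Big\}.$$ *)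

(* Defs.v *)
From Stdlib Require Import Reals Lra List.
Import ListNotations.
Open Scope R_scope.

Fixpoint sumR (n : nat) (f : nat -> R) : R :=
  match n with O => 0 | S k => sumR k f + f k end.
Fixpoint prodR (n : nat) (f : nat -> R) : R :=
  match n with O => 1 | S k => prodR k f * f k end.

Definition ImpInt (f : R -> R) (l : R) : Prop :=
  (forall a b, 0 < a -> a <= b -> exists pr : Riemann_integrable f a b, True) /\
  (forall eps, 0 < eps -> exists a0 b0, 0 < a0 /\ a0 <= b0 /\
     forall a b (pr : Riemann_integrable f a b),
       0 < a -> a <= a0 -> b0 <= b -> Rabs (RiemannInt pr - l) < eps).

(* Iterated improper integral over (0,+oo)^k of F : list R -> R
   (the first list entry is the outermost integration variable). *)
Fixpoint IterInt (k : nat) (F : list R -> R) (l : R) : Prop :=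
  match k with
  | O => l = F []
  | S k' => exists G : R -> R, ImpInt G l /\
      forall t, 0 < t -> IterInt k' (fun xs => F (t :: xs)) (G t)
  end.

(* Coordinates of xs = [gamma^2; tau_1^2; ...; tau_m^2]. *)
Definition gam2 (xs : list R) : R := nth 0 xs 0.
Definition tau2 (xs : list R) (j : nat) : R := nth (S j) xs 0.

Definition vdiag (xs : list R) (j : nat) : R := / (/ tau2 xs j + / gam2 xs).

Definition prior_unnorm (m : nat) (l1 l2 : R) (xs : list R) : R :=
  prodR m (fun j => / sqrt (tau2 xs j) * / sqrt (/ tau2 xs j + / gam2 xs))
  * / sqrt (gam2 xs)
  * exp (- (l1 ^ 2 / 2) * sumR m (fun j => tau2 xs j) - (l2 ^ 2 / 2) * gam2 xs).

Definition normal_dens (m : nat) (sigma : R) (beta : nat -> R) (xs : list R) : R :=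
  prodR m (fun j => / sqrt (2 * PI * sigma ^ 2 * vdiag xs j)
                    * exp (- (beta j ^ 2) / (2 * sigma ^ 2 * vdiag xs j))).

Definition norm1 (m : nat) (beta : nat -> R) : R := sumR m (fun j => Rabs (beta j)).
Definition norm2 (m : nat) (beta : nat -> R) : R := sqrt (sumR m (fun j => beta j ^ 2)).

(* Main.v *)
Require Import Defs.
From Stdlib Require Import Reals List.
From Coquelicot Require Import Coquelicot.
From Stdlib Require Import Reals List Lra ClassicalEpsilon Classical FunctionalExtensionality.
Open Scope R_scope.


Definition ImpI (f : R -> R) (l : R) : Prop :=
  (forall a b, 0 < a -> a <= b -> ex_RInt f a b) /\
  (forall eps, 0 < eps -> exists a0 b0, 0 < a0 /\ a0 <= b0 /\
     forall a b, 0 < a -> a <= a0 -> b0 <= b -> Rabs (RInt f a b - l) < eps).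

Lemma Chas (f : R -> R) a b c : ex_RInt f a b -> ex_RInt f b c ->
  RInt f a b + RInt f b c = RInt f a c.
Proof. intros; exact (RInt_Chasles f a b c H H0). Qed.

Lemma RInt_scalR (f : R -> R) a b k : ex_RInt f a b ->
  RInt (fun x => k * f x) a b = k * RInt f a b.
Proof. intros; apply (RInt_scal f a b k); auto. Qed.

Lemma ex_RInt_scalR (f : R -> R) a b k : ex_RInt f a b ->
  ex_RInt (fun x => k * f x) a b.
Proof. intros; apply (ex_RInt_scal f a b k); auto. Qed.

Lemma RInt_minusR (f g : R -> R) a b : ex_RInt f a b -> ex_RInt g a b ->
  RInt (fun x => f x - g x) a b = RInt f a b - RInt g a b.
Proof. intros; apply (RInt_minus f g a b); auto. Qed.

Lemma ex_RInt_minusR (f g : R -> R) a b : ex_RInt f a b -> ex_RInt g a b ->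
  ex_RInt (fun x => f x - g x) a b.
Proof. intros; apply (ex_RInt_minus f g a b); auto. Qed.

Lemma ImpI_ImpInt f l : ImpI f l -> ImpInt f l.
Proof.
  intros [H1 H2]; split.
  - intros a b ha hab. exists (ex_RInt_Reals_0 _ _ _ (H1 a b ha hab)); exact I.
  - intros eps he. destruct (H2 eps he) as (a0 & b0 & h0 & h1 & h2).
    exists a0, b0; split; [lra|split;[lra|]].
    intros a b pr ha hb1 hb2. rewrite <- RInt_Reals. apply h2; auto.
Qed.

Lemma ImpI_scal f l k : ImpI f l -> ImpI (fun x => k * f x) (k * l).
Proof.
  intros [H1 H2]; split.
  - intros; apply ex_RInt_scalR; auto.
  - intros eps he.
    assert (he' : 0 < eps / (Rabs k + 1)).
    { apply Rdiv_lt_0_compat; auto. pose proof (Rabs_pos k); lra. }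
    destruct (H2 _ he') as (a0 & b0 & h0 & h1 & h2).
    exists a0, b0; split; [lra|split;[lra|]].
    intros a b ha hb1 hb2. rewrite RInt_scalR by (apply H1; lra).
    replace (k * RInt f a b - k * l) with (k * (RInt f a b - l)) by ring.
    rewrite Rabs_mult.
    specialize (h2 a b ha hb1 hb2).
    pose proof (Rabs_pos k). pose proof (Rabs_pos (RInt f a b - l)).
    apply Rle_lt_trans with ((Rabs k + 1) * Rabs (RInt f a b - l)). nra.
    replace eps with ((Rabs k + 1) * (eps / (Rabs k + 1))) by (field; lra).
    apply Rmult_lt_compat_l; lra.
Qed.

Lemma ImpI_minus f g l1 l2 : ImpI f l1 -> ImpI g l2 ->
  ImpI (fun x => f x - g x) (l1 - l2).
Proof.
  intros [H1 H2] [G1 G2]; split.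
  - intros; apply ex_RInt_minusR; auto.
  - intros eps he.
    destruct (H2 (eps/2)) as (a0 & b0 & h0 & h1 & h2); [lra|].
    destruct (G2 (eps/2)) as (a1 & b1 & g0 & g1 & g2); [lra|].
    exists (Rmin a0 a1), (Rmax b0 b1).
    split; [apply Rmin_pos; auto|].
    split. { pose proof (Rmin_l a0 a1). pose proof (Rmax_l b0 b1). lra. }
    intros a b ha hb1 hb2.
    pose proof (Rmin_l a0 a1). pose proof (Rmin_r a0 a1).
    pose proof (Rmax_l b0 b1). pose proof (Rmax_r b0 b1).
    rewrite RInt_minusR by (first [apply H1 | apply G1]; lra).
    specialize (h2 a b ha ltac:(lra) ltac:(lra)).
    specialize (g2 a b ha ltac:(lra) ltac:(lra)).
    replace (RInt f a b - RInt g a b - (l1 - l2)) with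
      ((RInt f a b - l1) - (RInt g a b - l2)) by ring.
    eapply Rle_lt_trans. apply Rabs_triang. rewrite Rabs_Ropp. lra.
Qed.

Lemma ImpI_ext f g l : (forall x, 0 < x -> f x = g x) -> ImpI f l -> ImpI g l.
Proof.
  intros E [H1 H2]; split.
  - intros a b ha hab. apply (ex_RInt_ext f); [|apply H1; auto].
    intros x hx. apply E. rewrite Rmin_left in hx by lra. lra.
  - intros eps he. destruct (H2 eps he) as (a0 & b0 & h0 & h1 & h2).
    exists a0, b0; split; [lra|split;[lra|]].
    intros a b ha hb1 hb2. rewrite <- (RInt_ext f).
    apply h2; auto.
    intros x hx. apply E. rewrite Rmin_left in hx by lra. lra.
Qed.

Lemma ImpI_bound f l M : ImpI f l ->
  (forall a b, 0 < a -> a <= b -> Rabs (RInt f a b) <= M) -> Rabs l <= M.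
Proof.
  intros [H1 H2] HB. apply Rnot_lt_le; intro Hc.
  destruct (H2 (Rabs l - M)) as (a0 & b0 & h0 & h1 & h2); [lra|].
  specialize (h2 a0 b0 h0 (Rle_refl _) (Rle_refl _)).
  specialize (HB a0 b0 h0 h1).
  pose proof (Rabs_triang (RInt f a0 b0) (l - RInt f a0 b0)).
  replace (RInt f a0 b0 + (l - RInt f a0 b0)) with l in H by ring.
  rewrite <- Rabs_Ropp in h2.
  replace (- (RInt f a0 b0 - l)) with (l - RInt f a0 b0) in h2 by ring.
  lra.
Qed.

Lemma ImpI_exists (f : R -> R) B :
  (forall x, 0 < x -> continuous f x) ->
  (forall x, 0 < x -> 0 <= f x) ->
  (forall a b, 0 < a -> a <= b -> RInt f a b <= B) ->
  exists l, ImpI f l /\ l <= B /\ (forall a b, 0 < a -> a <= b -> RInt f a b <= l).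
Proof.
  intros Hc Hp HB.
  assert (Hex : forall a b, 0 < a -> a <= b -> ex_RInt f a b).
  { intros a b ha hab. apply (ex_RInt_continuous (V:=R_CompleteNormedModule)). intros z hz.
    rewrite Rmin_left in hz by lra. apply Hc. lra. }
  set (E := fun y => exists a b, 0 < a /\ a <= b /\ y = RInt f a b).
  assert (bE : bound E). { exists B. intros y (a & b & ha & hab & ->). auto. }
  assert (iE : exists y, E y). { exists (RInt f 1 1). exists 1, 1. repeat split; lra. }
  destruct (completeness E bE iE) as [l [Hub Hlub]].
  exists l. split; [|split].
  - split; auto. intros eps he.
    assert (exists y, E y /\ l - eps < y) as (y & (a0 & b0 & ha0 & hab0 & ->) & hy).
    { apply NNPP; intro N. assert (l <= l - eps); [|lra].
      apply Hlub. intros y Ey. apply Rnot_lt_le. intro Hy. apply N. exists y. auto. }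
    exists a0, b0. split; [auto|split;[auto|]].
    intros a b ha hb1 hb2.
    assert (RInt f a b <= l) by (apply Hub; exists a, b; repeat split; lra).
    assert (RInt f a b = RInt f a a0 + RInt f a0 b0 + RInt f b0 b).
    { rewrite Chas, Chas; auto; apply Hex; lra. }
    assert (0 <= RInt f a a0).
    { apply RInt_ge_0; auto. intros; apply Hp; lra. }
    assert (0 <= RInt f b0 b).
    { apply RInt_ge_0; [lra| apply Hex; lra|]. intros; apply Hp; lra. }
    rewrite Rabs_left1; lra.
  - apply Hlub. intros y (a & b & ha & hab & ->). auto.
  - intros a b ha hab. apply Hub. exists a, b; auto.
Qed.

Lemma FTC (F df : R -> R) a b : a <= b ->
  (forall x, a <= x <= b -> is_derive F x (df x)) ->
  (forall x, a <= x <= b -> continuous df x) -> RInt df a b = F b - F a.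
Proof.
  intros hab HD HC. apply is_RInt_unique.
  apply (is_RInt_derive F df a b).
  - intros x hx. rewrite Rmin_left, Rmax_right in hx by lra. auto.
  - intros x hx. rewrite Rmin_left, Rmax_right in hx by lra. auto.
Qed.

Lemma cder (f : R -> R) (x : R) : ex_derive f x -> continuous f x.
Proof. apply (ex_derive_continuous (K:=R_AbsRing) (V:=R_NormedModule)). Qed.

Lemma exRc (f : R -> R) a b : 0 < a -> a <= b ->
  (forall x, 0 < x -> continuous f x) -> ex_RInt f a b.
Proof.
  intros ha hab Hc. apply (ex_RInt_continuous (V:=R_CompleteNormedModule)).
  intros z hz. rewrite Rmin_left in hz by lra. apply Hc. lra.
Qed.

Lemma cont_exp_lin c (x : R) : continuous (fun t => exp (- c * t)) x.
Proof. apply cder. auto_derive. auto. Qed.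

Lemma cont_isqrt_exp c (x : R) : 0 < x -> continuous (fun t => / sqrt t * exp (- c * t)) x.
Proof.
  intro hx. apply cder. auto_derive.
  pose proof (sqrt_lt_R0 x hx). repeat split; lra.
Qed.

Lemma int_exp_bound c a b : 0 < c -> 0 < a -> a <= b ->
  RInt (fun t => exp (- c * t)) a b <= / c.
Proof.
  intros hc ha hab.
  rewrite (FTC (fun t => - / c * exp (- c * t))).
  - assert (exp (- c * a) <= 1).
    { rewrite <- exp_0. left. apply exp_increasing. nra. }
    pose proof (exp_pos (- c * b)).
    assert (0 < / c) by (apply Rinv_0_lt_compat; auto).
    nra.
  - auto.
  - intros x hx. auto_derive; auto. field. lra.
  - intros; apply cont_exp_lin.
Qed.

Lemma int_isqrt_exp_bound c a b : 0 < c -> 0 < a -> a <= b ->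
  RInt (fun t => / sqrt t * exp (- c * t)) a b <= PI / sqrt c.
Proof.
  intros hc ha hab.
  pose proof (sqrt_lt_R0 c hc) as hsc.
  apply Rle_trans with (RInt (fun t => / sqrt t * / (1 + c * t)) a b).
  - apply RInt_le; auto.
    + apply exRc; auto. intros; apply cont_isqrt_exp; auto.
    + apply exRc; auto. intros x hx. apply cder. auto_derive.
      pose proof (sqrt_lt_R0 x hx). repeat split; nra.
    + intros x hx. assert (0 < x) by lra.
      pose proof (sqrt_lt_R0 x H).
      apply Rmult_le_compat_l. left; apply Rinv_0_lt_compat; auto.
      pose proof (exp_ineq1_le (c * x)).
      replace (exp (- c * x)) with (/ exp (c * x)).
      apply Rinv_le_contravar; nra.
      rewrite <- exp_Ropp. f_equal; ring.
  - rewrite (FTC (fun t => 2 / sqrt c * atan (sqrt c * sqrt t))); auto.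
    + assert (0 <= atan (sqrt c * sqrt a)).
      { rewrite <- atan_0. destruct (Req_dec (sqrt c * sqrt a) 0) as [e|n].
        rewrite e; lra. left. apply atan_increasing.
        pose proof (sqrt_lt_R0 a ha). nra. }
      pose proof (atan_bound (sqrt c * sqrt b)).
      assert (0 < 2 / sqrt c) by (apply Rdiv_lt_0_compat; lra).
      replace (PI / sqrt c) with (2 / sqrt c * (PI / 2)) by (field; lra).
      nra.
    + intros x hx. assert (0 < x) by lra. pose proof (sqrt_lt_R0 x H).
      auto_derive. auto.
      replace (sqrt c * sqrt x * (sqrt c * sqrt x * 1)) with (c * x).
      field. repeat split; try lra. nra.
      pose proof (sqrt_sqrt c). pose proof (sqrt_sqrt x). nra.
    + intros x hx. assert (0 < x) by lra. apply cder. auto_derive.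
      pose proof (sqrt_lt_R0 x H). repeat split; nra.
Qed.

Ltac nz := repeat (apply Rmult_integral_contrapositive_currified); intro; nra.
Ltac sc := repeat split; try nz; try nra.
Ltac toR := match goal with |- ?A = ?B => change (@eq R A B) end.

Lemma RInt_compR (f g dg : R -> R) a b :
  (forall x, Rmin a b <= x <= Rmax a b -> continuous f (g x)) ->
  (forall x, Rmin a b <= x <= Rmax a b -> is_derive g x (dg x) /\ continuous dg x) ->
  RInt (fun y => dg y * f (g y)) a b = RInt f (g a) (g b).
Proof. intros H1 H2. exact (RInt_comp f g dg a b H1 H2). Qed.

Lemma RInt_swapR (f : R -> R) a b : ex_RInt f a b -> RInt f b a = - RInt f a b.
Proof. intros H. rewrite <- (opp_RInt_swap f a b H). reflexivity. Qed.

Lemma RInt_plusR (f g : R -> R) a b : ex_RInt f a b -> ex_RInt g a b ->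
  RInt (fun x => f x + g x) a b = RInt f a b + RInt g a b.
Proof. intros; apply (RInt_plus f g a b); auto. Qed.

Lemma exRc2 (f : R -> R) a b : 0 < a -> 0 < b ->
  (forall x, 0 < x -> continuous f x) -> ex_RInt f a b.
Proof.
  intros ha hb Hc. apply (ex_RInt_continuous (V:=R_CompleteNormedModule)).
  intros z hz. apply Hc. pose proof (Rmin_glb_lt a b 0 ha hb). lra.
Qed.

Lemma exRall (f : R -> R) a b : (forall x, continuous f x) -> ex_RInt f a b.
Proof.
  intros Hc. apply (ex_RInt_continuous (V:=R_CompleteNormedModule)). auto.
Qed.

Lemma Rmin_pos_iv a b x : 0 < a -> 0 < b -> Rmin a b <= x <= Rmax a b -> 0 < x.
Proof. intros ha hb hx. pose proof (Rmin_glb_lt a b 0 ha hb). lra. Qed.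

Definition phi (a b t : R) : R := / sqrt t * exp (- a * t - b / t).
Definition gauss (y : R) : R := exp (- (y * y)).
Definition EE (Y : R) : R := RInt gauss 0 Y.
Definition psi (al be u : R) : R := gauss (al * u - be / u).

Lemma cont_gauss x : continuous gauss x.
Proof. apply cder. unfold gauss. auto_derive. auto. Qed.

Lemma cont_phi a b x : 0 < x -> continuous (phi a b) x.
Proof.
  intro hx. apply cder. unfold phi. auto_derive.
  pose proof (sqrt_lt_R0 x hx). repeat split; lra.
Qed.

Lemma cont_psi al be x : 0 < x -> continuous (psi al be) x.
Proof. intro hx. apply cder. unfold psi, gauss. auto_derive. repeat split; lra. Qed.

Lemma S1 a b u1 u2 : 0 < u1 -> 0 < u2 ->
  RInt (phi a b) (u1 * u1) (u2 * u2) =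
  2 * RInt (fun u => exp (- a * (u * u) - b / (u * u))) u1 u2.
Proof.
  intros h1 h2.
  rewrite <- (RInt_compR (phi a b) (fun u => u * u) (fun u => 2 * u)).
  - rewrite <- RInt_scalR.
    + apply RInt_ext. intros x hx.
      assert (0 < x). { apply (Rmin_pos_iv u1 u2 x h1 h2). lra. }
      unfold phi. rewrite sqrt_square by lra. toR. field. lra.
    + apply exRc2; auto. intros; apply cder; auto_derive; repeat split; intro; nra.
  - intros x hx. assert (0 < x) by (apply (Rmin_pos_iv u1 u2); auto).
    apply cont_phi. nra.
  - intros x hx. split. auto_derive; auto; ring. apply cder; auto_derive; auto.
Qed.

Lemma S3 al be u1 u2 : 0 < u1 -> 0 < u2 ->
  RInt (fun u => (al + be / (u * u)) * psi al be u) u1 u2 =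
  RInt gauss (al * u1 - be / u1) (al * u2 - be / u2).
Proof.
  intros h1 h2.
  rewrite <- (RInt_compR gauss (fun u => al * u - be / u) (fun u => al + be / (u * u))).
  - reflexivity.
  - intros; apply cont_gauss.
  - intros x hx. assert (0 < x) by (apply (Rmin_pos_iv u1 u2); auto).
    split. auto_derive. sc. toR; field; sc. apply cder; auto_derive; sc.
Qed.

Lemma S2 al be u1 u2 : 0 < al -> 0 < be -> 0 < u1 -> 0 < u2 ->
  RInt (psi al be) u1 u2 =
  RInt (fun v => be / (al * (v * v)) * psi al be v) (be / (al * u2)) (be / (al * u1)).
Proof.
  intros ha hb h1 h2.
  assert (c1 : 0 < be / (al * u1)) by (apply Rdiv_lt_0_compat; nra).
  assert (c2 : 0 < be / (al * u2)) by (apply Rdiv_lt_0_compat; nra).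
  assert (E1 : forall x, 0 < x -> be / (al * (be / (al * x))) = x) by (intros; field; lra).
  pose proof (RInt_compR (psi al be) (fun v => be / (al * v)) (fun v => - (be / (al * (v * v))))
     (be / (al * u1)) (be / (al * u2))) as HH.
  simpl in HH. rewrite E1, E1 in HH by auto. rewrite <- HH.
  - assert (exk : ex_RInt (fun v => be / (al * (v * v)) * psi al be v) (be / (al * u1)) (be / (al * u2))).
    { apply exRc2; auto. intros x hx. apply cder. unfold psi, gauss. auto_derive. sc. }
    rewrite (RInt_swapR _ _ _ exk).
    rewrite (RInt_ext _ (fun v => -1 * (be / (al * (v * v)) * psi al be v))).
    + rewrite RInt_scalR by auto. toR; ring.
    + intros v hv. assert (0 < v). { apply (Rmin_pos_iv _ _ v c1 c2). lra. }
      unfold psi. replace (al * (be / (al * v)) - be / (be / (al * v))) with (- (al * v - be / v))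
          by (field; sc).
      unfold gauss. toR. replace (- (al * v - be / v) * - (al * v - be / v)) with
          ((al * v - be / v) * (al * v - be / v)) by ring. ring.
  - intros x hx. assert (0 < x) by (apply (Rmin_pos_iv (be / (al * u1)) (be / (al * u2))); auto).
    apply cont_psi. apply Rdiv_lt_0_compat; nra.
  - intros x hx. assert (0 < x) by (apply (Rmin_pos_iv (be / (al * u1)) (be / (al * u2))); auto).
    split. auto_derive. sc. toR; field; sc. apply cder. auto_derive. sc.
Qed.

Lemma exg a b : ex_RInt gauss a b.
Proof. apply exRall. apply cont_gauss. Qed.

Lemma S4 Y : RInt gauss (- Y) Y = 2 * EE Y.
Proof.
  unfold EE. rewrite <- (Chas gauss (-Y) 0 Y) by apply exg.
  assert (RInt gauss (- Y) 0 = RInt gauss 0 Y).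
  { pose proof (RInt_compR gauss (fun z => - z) (fun _ => -1) Y 0) as HH.
    simpl in HH. rewrite Ropp_0 in HH. rewrite <- HH.
    - rewrite (RInt_ext _ (fun z => -1 * gauss z)).
      + rewrite RInt_scalR by apply exg. rewrite (RInt_swapR gauss 0 Y) by apply exg. toR; ring.
      + intros. unfold gauss. toR. f_equal. f_equal. f_equal. ring.
    - intros; apply cont_gauss.
    - intros. split. auto_derive; auto. apply cder. auto_derive. auto. }
  rewrite H. toR; ring.
Qed.

Lemma EE_bound x : 0 <= x -> 0 <= EE x <= x.
Proof.
  intro hx. unfold EE. split.
  - apply RInt_ge_0; auto. apply exg. intros; unfold gauss; left; apply exp_pos.
  - assert (RInt (fun _ => 1) 0 x = x).
    { rewrite (FTC (fun t => t) (fun _ => 1) 0 x); auto. toR; ring.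
      intros; auto_derive; auto. intros; apply cder; auto_derive; auto. }
    rewrite <- H at 2.
    apply RInt_le; auto. apply exg. apply exRall. intros; apply cder; auto_derive; auto.
    intros t ht. unfold gauss. rewrite <- exp_0. 
    destruct (Req_dec t 0). subst. rewrite Rmult_0_r, Ropp_0. lra.
    left; apply exp_increasing. assert (0 < t * t) by nra. lra.
Qed.

Lemma F0 a u1 u2 : 0 < a -> 0 < u1 -> 0 < u2 ->
  RInt (phi a 0) (u1 * u1) (u2 * u2) = 2 / sqrt a * (EE (sqrt a * u2) - EE (sqrt a * u1)).
Proof.
  intros ha h1 h2. pose proof (sqrt_lt_R0 a ha) as hs.
  rewrite S1 by auto.
  rewrite (RInt_ext _ (psi (sqrt a) 0)).
  2:{ intros x hx. unfold psi, gauss. toR. f_equal.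
      unfold Rdiv. rewrite !Rmult_0_l. replace a with (sqrt a * sqrt a) at 1 by (apply sqrt_sqrt; lra).
      ring. }
  pose proof (S3 (sqrt a) 0 u1 u2 h1 h2) as H3.
  rewrite (RInt_ext _ (fun u => sqrt a * psi (sqrt a) 0 u)) in H3.
  2:{ intros. unfold Rdiv. rewrite Rmult_0_l, Rplus_0_r. reflexivity. }
  rewrite RInt_scalR in H3 by (apply exRc2; auto; intros; apply cont_psi; auto).
  unfold Rdiv in H3. rewrite !Rmult_0_l, !Rminus_0_r in H3.
  assert (RInt gauss (sqrt a * u1) (sqrt a * u2) = EE (sqrt a * u2) - EE (sqrt a * u1)).
  { unfold EE. rewrite <- (Chas gauss 0 (sqrt a * u1)) by apply exg. toR. lra. }
  rewrite H in H3.
  apply (Rmult_eq_reg_l (sqrt a)); [|lra]. rewrite <- H3. field. lra.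
Qed.

Lemma Fb a b R : 0 < a -> 0 < b -> 0 < R ->
  RInt (phi a b) (sqrt b / (sqrt a * R) * (sqrt b / (sqrt a * R))) (R * R) =
  2 * exp (- 2 * (sqrt a * sqrt b)) / sqrt a * EE (sqrt a * R - sqrt b / R).
Proof.
  intros ha hb hR. pose proof (sqrt_lt_R0 a ha) as hsa. pose proof (sqrt_lt_R0 b hb) as hsb.
  set (al := sqrt a) in *. set (be := sqrt b) in *.
  assert (Ea : a = al * al) by (symmetry; apply sqrt_sqrt; lra).
  assert (Eb : b = be * be) by (symmetry; apply sqrt_sqrt; lra).
  set (u1 := be / (al * R)).
  assert (hu1 : 0 < u1) by (apply Rdiv_lt_0_compat; nra).
  rewrite S1 by auto.
  rewrite (RInt_ext _ (fun u => exp (- 2 * (al * be)) * psi al be u)).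
  2:{ intros x hx. assert (0 < x). { apply (Rmin_pos_iv u1 R x hu1 hR). lra. }
      unfold psi, gauss. toR. rewrite <- exp_plus. f_equal. rewrite Ea, Eb. field. lra. }
  rewrite RInt_scalR by (apply exRc2; auto; intros; apply cont_psi; auto).
  set (J := RInt (psi al be) u1 R).
  assert (HJ : J = RInt (fun v => be / (al * (v * v)) * psi al be v) u1 R).
  { unfold J. rewrite S2 by auto. f_equal; unfold u1; field; lra. }
  pose proof (S3 al be u1 R hu1 hR) as H3.
  rewrite (RInt_ext _ (fun u => al * psi al be u + al * (be / (al * (u * u)) * psi al be u))) in H3.
  2:{ intros x hx. assert (0 < x). { apply (Rmin_pos_iv u1 R x hu1 hR). lra. }
      toR. field. lra. }
  assert (ex1 : ex_RInt (psi al be) u1 R) by (apply exRc2; auto; intros; apply cont_psi; auto).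
  assert (ex2 : ex_RInt (fun v => be / (al * (v * v)) * psi al be v) u1 R).
  { apply exRc2; auto. intros x hx. apply cder. unfold psi, gauss. auto_derive. sc. }
  rewrite RInt_plusR in H3 by (apply ex_RInt_scalR; auto).
  rewrite !RInt_scalR in H3 by auto.
  fold J in H3. rewrite <- HJ in H3.
  replace (al * u1 - be / u1) with (- (al * R - be / R)) in H3 by (unfold u1; field; lra).
  rewrite S4 in H3.
  assert (J = EE (al * R - be / R) / al) by (apply (Rmult_eq_reg_l (2 * al)); [|lra]; rewrite <- H3 at 1 || idtac; field_simplify; lra).
  rewrite H. toR. field. lra.
Qed.

Lemma zero_eps x : (forall eps, 0 < eps -> Rabs x <= eps) -> x = 0.
Proof.
  intros H. destruct (Req_dec x 0) as [e|n]; auto.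
  pose proof (Rabs_pos_lt x n). specialize (H (Rabs x / 2) ltac:(lra)). lra.
Qed.

Lemma ImpI_unique f l1 l2 : ImpI f l1 -> ImpI f l2 -> l1 = l2.
Proof.
  intros [H1 H2] [G1 G2].
  apply Rminus_diag_uniq. apply zero_eps. intros eps he.
  destruct (H2 (eps/2)) as (a0 & b0 & h0 & h1 & h2); [lra|].
  destruct (G2 (eps/2)) as (a1 & b1 & g0 & g1 & g2); [lra|].
  set (a := Rmin a0 a1). set (b := Rmax b0 b1).
  assert (0 < a) by (apply Rmin_pos; auto).
  pose proof (Rmin_l a0 a1). pose proof (Rmin_r a0 a1).
  pose proof (Rmax_l b0 b1). pose proof (Rmax_r b0 b1).
  specialize (h2 a b H ltac:(unfold a; lra) ltac:(unfold b; lra)).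
  specialize (g2 a b H ltac:(unfold a; lra) ltac:(unfold b; lra)).
  replace (l1 - l2) with ((RInt f a b - l2) - (RInt f a b - l1)) by ring.
  eapply Rle_trans. apply Rabs_triang. rewrite Rabs_Ropp. lra.
Qed.

Lemma step1 a L0 : 0 < a -> ImpI (phi a 0) L0 ->
  forall eps, 0 < eps -> exists Y0, 0 < Y0 /\ forall Y, Y0 <= Y ->
    Rabs (2 / sqrt a * EE Y - L0) <= 2 * eps.
Proof.
  intros ha [_ H2] eps he.
  pose proof (sqrt_lt_R0 a ha) as hs.
  destruct (H2 eps he) as (a0 & b0 & h0 & h1 & h2).
  pose proof (sqrt_pos b0).
  exists (sqrt a * (sqrt b0 + 1)). split. nra.
  intros Y hY.
  set (u2 := Y / sqrt a).
  assert (hu2 : sqrt b0 + 1 <= u2).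
  { unfold u2. apply (Rmult_le_reg_l (sqrt a)); auto. field_simplify; lra. }
  set (u1 := Rmin (sqrt a0) (eps / 2)).
  assert (hu1 : 0 < u1) by (apply Rmin_pos; [apply sqrt_lt_R0|]; lra).
  pose proof (Rmin_l (sqrt a0) (eps/2)). pose proof (Rmin_r (sqrt a0) (eps/2)).
  assert (u1 * u1 <= a0).
  { pose proof (sqrt_sqrt a0 ltac:(lra)). fold u1 in H0. nra. }
  assert (b0 <= u2 * u2).
  { pose proof (sqrt_sqrt b0 ltac:(lra)). nra. }
  specialize (h2 (u1 * u1) (u2 * u2) ltac:(nra) H3 H4).
  rewrite F0 in h2 by (auto; lra).
  replace (sqrt a * u2) with Y in h2 by (unfold u2; field; lra).
  pose proof (EE_bound (sqrt a * u1) ltac:(nra)).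
  assert (0 <= 2 / sqrt a * EE (sqrt a * u1) <= eps).
  { split. apply Rmult_le_pos; [|lra]. left; apply Rdiv_lt_0_compat; lra.
    apply Rle_trans with (2 / sqrt a * (sqrt a * u1)).
    apply Rmult_le_compat_l; [left; apply Rdiv_lt_0_compat|]; lra.
    replace (2 / sqrt a * (sqrt a * u1)) with (2 * u1) by (field; lra). fold u1 in H1. lra. }
  replace (2 / sqrt a * EE Y - L0) with
    ((2 / sqrt a * (EE Y - EE (sqrt a * u1)) - L0) + 2 / sqrt a * EE (sqrt a * u1)) by ring.
  eapply Rle_trans. apply Rabs_triang. rewrite (Rabs_right (2 / sqrt a * _)) by lra. lra.
Qed.

Lemma phi_value a b L0 Lb : 0 < a -> 0 <= b -> ImpI (phi a 0) L0 -> ImpI (phi a b) Lb ->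
  Lb = exp (- 2 * (sqrt a * sqrt b)) * L0.
Proof.
  intros ha hb H0 Hb.
  destruct (Req_dec b 0) as [->|nb].
  { rewrite sqrt_0, Rmult_0_r, Rmult_0_r, exp_0, Rmult_1_l. eapply ImpI_unique; eauto. }
  assert (hb' : 0 < b) by lra.
  pose proof (sqrt_lt_R0 a ha) as hsa. pose proof (sqrt_lt_R0 b hb') as hsb.
  apply Rminus_diag_uniq. apply zero_eps. intros eps0 he0.
  set (eps := eps0 / 3).
  assert (he : 0 < eps) by (unfold eps; lra).
  destruct (step1 a L0 ha H0 eps he) as (Y0 & hY0 & HY).
  destruct Hb as [_ Hb2]. destruct (Hb2 eps he) as (a1 & b1 & g0 & g1 & g2).
  set (R := 1 + b1 + b / (a * a1) + (Y0 + sqrt b) / sqrt a).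
  assert (q1 : 0 <= b / (a * a1)) by (left; apply Rdiv_lt_0_compat; nra).
  assert (q2 : 0 <= (Y0 + sqrt b) / sqrt a) by (left; apply Rdiv_lt_0_compat; nra).
  assert (hR1 : 1 <= R) by (unfold R; lra).
  assert (hR : 0 < R) by lra.
  assert (RR : R <= R * R) by nra.
  set (u1 := sqrt b / (sqrt a * R)).
  assert (Eu : u1 * u1 = b / (a * (R * R))).
  { transitivity ((sqrt b * sqrt b) / ((sqrt a * sqrt a) * (R * R))).
    unfold u1; field; lra. rewrite !sqrt_sqrt by lra. reflexivity. }
  assert (hu1 : 0 < u1 * u1) by (rewrite Eu; apply Rdiv_lt_0_compat; nra).
  assert (hu1' : u1 * u1 <= a1).
  { rewrite Eu. apply (Rmult_le_reg_l (a * (R * R))). nra.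
    field_simplify; [|nra]. assert (b / (a * a1) <= R) by (unfold R; lra).
    apply (Rmult_le_compat_l (a * a1)) in H; [|nra].
    replace (a * a1 * (b / (a * a1))) with b in H by (field; lra). nra. }
  assert (hR2 : b1 <= R * R) by (unfold R in RR |- *; lra).
  specialize (g2 (u1 * u1) (R * R) hu1 hu1' hR2).
  unfold u1 in g2. rewrite Fb in g2 by auto.
  set (Y := sqrt a * R - sqrt b / R) in *.
  assert (hY : Y0 <= Y).
  { unfold Y. assert (sqrt b / R <= sqrt b).
    { apply (Rmult_le_reg_l R); auto. field_simplify; nra. }
    assert ((Y0 + sqrt b) / sqrt a <= R) by (unfold R; lra).
    apply (Rmult_le_compat_l (sqrt a)) in H1; [|lra].
    replace (sqrt a * ((Y0 + sqrt b) / sqrt a)) with (Y0 + sqrt b) in H1 by (field; lra). lra. }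
  specialize (HY Y hY).
  set (e := exp (- 2 * (sqrt a * sqrt b))) in *.
  assert (0 < e) by apply exp_pos.
  assert (e <= 1). { unfold e. rewrite <- exp_0. left. apply exp_increasing. nra. }
  replace (Lb - e * L0) with (- (2 * e / sqrt a * EE Y - Lb) + e * (2 / sqrt a * EE Y - L0))
    by (field; lra).
  eapply Rle_trans. apply Rabs_triang. rewrite Rabs_Ropp, Rabs_mult, (Rabs_right e) by lra.
  assert (e * Rabs (2 / sqrt a * EE Y - L0) <= 2 * eps).
  { apply Rle_trans with (1 * (2 * eps)). apply Rmult_le_compat; try lra. apply Rabs_pos. lra. }
  unfold eps in *. lra.
Qed.

Lemma IterInt_ext k : forall F F' l, IterInt k F l ->
  (forall xs, length xs = k -> Forall (fun x => 0 < x) xs -> F xs = F' xs) -> IterInt k F' l.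
Proof.
  induction k as [|k IH]; simpl; intros F F' l H E.
  - rewrite H. apply E; auto.
  - destruct H as (G & HG & HI). exists G. split; auto.
    intros t ht. apply (IH _ _ _ (HI t ht)).
    intros xs hl hf. apply E; simpl; auto.
Qed.

Lemma prodR_shift n f : prodR (S n) f = f 0%nat * prodR n (fun j => f (S j)).
Proof.
  induction n as [|n IH]; simpl. ring.
  simpl in IH. rewrite IH. ring.
Qed.

Lemma IterInt_prod n : forall (fs : nat -> R -> R) (ls : nat -> R) c,
  (forall j, ImpI (fs j) (ls j)) ->
  IterInt n (fun xs => c * prodR n (fun j => fs j (nth j xs 0))) (c * prodR n ls).
Proof.
  induction n as [|n IH]; intros fs ls c H.
  - simpl. reflexivity.
  - exists (fun t => (c * fs 0%nat t) * prodR n (fun j => ls (S j))). split.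
    + apply ImpI_ImpInt.
      apply (ImpI_ext (fun t => (c * prodR n (fun j => ls (S j))) * fs 0%nat t)).
      { intros; ring. }
      rewrite prodR_shift.
      replace (c * (ls 0%nat * prodR n (fun j => ls (S j)))) with
        ((c * prodR n (fun j => ls (S j))) * ls 0%nat) by ring.
      apply ImpI_scal. apply H.
    + intros t ht.
      apply (IterInt_ext n (fun xs => (c * fs 0%nat t) * prodR n (fun j => fs (S j) (nth j xs 0)))).
      * apply (IH (fun j => fs (S j)) (fun j => ls (S j))). intros; apply H.
      * intros xs _ _. rewrite prodR_shift. simpl. ring.
Qed.

Lemma prodR_mult m f g : prodR m (fun j => f j * g j) = prodR m f * prodR m g.
Proof. induction m; simpl. ring. rewrite IHm. ring. Qed.

Lemma prodR_const m x : prodR m (fun _ => x) = x ^ m.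
Proof. induction m; simpl. ring. rewrite IHm. ring. Qed.

Lemma prodR_exp m f : prodR m (fun j => exp (f j)) = exp (sumR m f).
Proof. induction m; simpl. rewrite exp_0; auto. rewrite IHm, exp_plus. ring. Qed.

Lemma sumR_scal m k f : sumR m (fun j => k * f j) = k * sumR m f.
Proof. induction m; simpl. ring. rewrite IHm. ring. Qed.

Lemma prodR_ext_lt m f g : (forall j, (j < m)%nat -> f j = g j) -> prodR m f = prodR m g.
Proof.
  induction m; simpl; intros H; auto.
  rewrite IHm, H; auto.
Qed.

Lemma sumR_ext_lt m f g : (forall j, (j < m)%nat -> f j = g j) -> sumR m f = sumR m g.
Proof.
  induction m; simpl; intros H; auto.
  rewrite IHm, H; auto.
Qed.

Lemma prodR_pos m f : (forall j, (j < m)%nat -> 0 < f j) -> 0 < prodR m f.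
Proof.
  induction m; simpl; intros H. lra. apply Rmult_lt_0_compat; auto.
Qed.

Lemma nth_pos xs j : Forall (fun x => 0 < x) xs -> (j < length xs)%nat -> 0 < nth j xs 0.
Proof.
  intros HF hj. rewrite Forall_forall in HF. apply HF. apply nth_In. auto.
Qed.

Lemma cminus (f g : R -> R) (x : R) : continuous f x -> continuous g x ->
  continuous (fun t => f t - g t) x.
Proof. intros; apply (continuous_minus f g x); auto. Qed.
Lemma cmult (f g : R -> R) (x : R) : continuous f x -> continuous g x ->
  continuous (fun t => f t * g t) x.
Proof. intros; apply (continuous_mult f g x); auto. Qed.
Lemma cabs (f : R -> R) (x : R) : continuous f x -> continuous (fun t => Rabs (f t)) x.
Proof. intros; apply (continuous_Rabs_comp f x); auto. Qed.

Definition psiZ (c g t : R) : R := sqrt (g / (g + t)) * exp (- c * t).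

Lemma cont_psiZ c g t : 0 < g -> 0 < t -> continuous (psiZ c g) t.
Proof.
  intros hg ht. apply cder. unfold psiZ. auto_derive.
  repeat split; try (apply Rdiv_lt_0_compat; lra); try nz; try lra.
Qed.

Lemma psiZ_le c g t : 0 < g -> 0 < t -> 0 < psiZ c g t <= exp (- c * t).
Proof.
  intros hg ht. unfold psiZ. pose proof (exp_pos (- c * t)).
  assert (0 < g / (g + t)) by (apply Rdiv_lt_0_compat; lra).
  assert (g / (g + t) <= 1).
  { apply (Rmult_le_reg_r (g + t)); [lra|]. field_simplify; lra. }
  pose proof (sqrt_lt_R0 _ H0).
  assert (sqrt (g / (g + t)) <= 1) by (rewrite <- sqrt_1; apply sqrt_le_1_alt; auto).
  split. apply Rmult_lt_0_compat; auto. nra.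
Qed.

Lemma psiZ_exists c g : 0 < c -> 0 < g -> exists l, ImpI (psiZ c g) l /\ 0 < l <= / c.
Proof.
  intros hc hg.
  destruct (ImpI_exists (psiZ c g) (/ c)) as (l & Hl & Hb & Hlow).
  - intros; apply cont_psiZ; auto.
  - intros; left; apply psiZ_le; auto.
  - intros a b ha hab. eapply Rle_trans; [|apply (int_exp_bound c a b); auto].
    apply RInt_le; auto.
    + apply exRc; auto. intros; apply cont_psiZ; auto.
    + apply exRc; auto. intros; apply cont_exp_lin.
    + intros x hx. apply psiZ_le; lra.
  - exists l. split; auto. split; auto.
    eapply Rlt_le_trans; [|apply (Hlow 1 2); lra].
    apply RInt_gt_0. lra. intros; apply psiZ_le; lra. intros; apply cont_psiZ; lra.
Qed.

Definition hZ (c g : R) : R := epsilon (inhabits 0) (fun l => ImpI (psiZ c g) l).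

Lemma hZ_spec c g : 0 < c -> 0 < g -> ImpI (psiZ c g) (hZ c g) /\ 0 < hZ c g <= / c.
Proof.
  intros hc hg. destruct (psiZ_exists c g hc hg) as (l & Hl & Hb).
  assert (ImpI (psiZ c g) (hZ c g)).
  { unfold hZ. apply epsilon_spec. exists l; auto. }
  split; auto. rewrite (ImpI_unique _ _ _ H Hl). auto.
Qed.

Lemma sqrt_holder x y : 0 <= x -> 0 <= y -> Rabs (sqrt x - sqrt y) <= sqrt (Rabs (x - y)).
Proof.
  intros hx hy.
  assert (K : forall x y, 0 <= y -> y <= x -> sqrt x - sqrt y <= sqrt (x - y)).
  { clear. intros x y hy hxy.
    pose proof (sqrt_sqrt x ltac:(lra)). pose proof (sqrt_sqrt y hy).
    pose proof (sqrt_sqrt (x - y) ltac:(lra)).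
    pose proof (sqrt_pos x). pose proof (sqrt_pos y). pose proof (sqrt_pos (x - y)).
    assert (sqrt y <= sqrt x) by (apply sqrt_le_1_alt; auto).
    apply Rnot_lt_le. intro N. 
    assert (sqrt (x - y) * sqrt (x - y) < (sqrt x - sqrt y) * (sqrt x - sqrt y)) by nra.
    nra. }
  destruct (Rle_dec y x).
  - assert (sqrt y <= sqrt x) by (apply sqrt_le_1_alt; auto).
    rewrite (Rabs_right (sqrt x - sqrt y)) by lra. rewrite (Rabs_right (x - y)) by lra.
    apply K; auto.
  - assert (sqrt x <= sqrt y) by (apply sqrt_le_1_alt; lra).
    rewrite (Rabs_left1 (sqrt x - sqrt y)) by lra. rewrite (Rabs_left1 (x - y)) by lra.
    replace (- (x - y)) with (y - x) by ring.
    replace (- (sqrt x - sqrt y)) with (sqrt y - sqrt x) by ring. apply K; lra.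
Qed.

Lemma frac_diff g g0 t : 0 < g -> 0 < g0 -> 0 < t ->
  Rabs (g / (g + t) - g0 / (g0 + t)) <= Rabs (g - g0) / g0.
Proof.
  intros hg hg0 ht.
  replace (g / (g + t) - g0 / (g0 + t)) with ((g - g0) * (t / ((g + t) * (g0 + t))))
    by (field; lra).
  rewrite Rabs_mult. rewrite (Rabs_right (t / _)).
  2:{ left. apply Rdiv_lt_0_compat; nra. }
  unfold Rdiv at 2. apply Rmult_le_compat_l. apply Rabs_pos.
  replace (t / ((g + t) * (g0 + t))) with ((t / (g + t)) * / (g0 + t)) by (field; lra).
  assert (0 <= t / (g + t) <= 1).
  { split. left; apply Rdiv_lt_0_compat; lra.
    apply (Rmult_le_reg_r (g + t)); [lra|]. field_simplify; lra. }
  assert (0 < / (g0 + t) <= / g0).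
  { split. apply Rinv_0_lt_compat; lra. apply Rinv_le_contravar; lra. }
  nra.
Qed.

Lemma hZ_diff c g g0 : 0 < c -> 0 < g -> 0 < g0 ->
  Rabs (hZ c g - hZ c g0) <= sqrt (Rabs (g - g0) / g0) * / c.
Proof.
  intros hc hg hg0.
  destruct (hZ_spec c g hc hg) as [H1 _]. destruct (hZ_spec c g0 hc hg0) as [H2 _].
  pose proof (ImpI_minus _ _ _ _ H1 H2) as HM.
  set (k := sqrt (Rabs (g - g0) / g0)).
  assert (hk : 0 <= k) by apply sqrt_pos.
  apply (ImpI_bound _ _ _ HM). intros a b ha hab.
  assert (E : forall x, 0 < x -> Rabs (psiZ c g x - psiZ c g0 x) <= k * exp (- c * x)).
  { intros x hx. unfold psiZ.
    replace (sqrt (g / (g + x)) * exp (- c * x) - sqrt (g0 / (g0 + x)) * exp (- c * x))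
      with ((sqrt (g / (g + x)) - sqrt (g0 / (g0 + x))) * exp (- c * x)) by ring.
    rewrite Rabs_mult, (Rabs_right (exp _)) by (left; apply exp_pos).
    apply Rmult_le_compat_r. left; apply exp_pos.
    eapply Rle_trans. apply sqrt_holder; left; apply Rdiv_lt_0_compat; lra.
    apply sqrt_le_1_alt. apply frac_diff; auto. }
  assert (exd : ex_RInt (fun x => psiZ c g x - psiZ c g0 x) a b).
  { apply exRc; auto. intros x hx. apply cminus; apply cont_psiZ; auto. }
  eapply Rle_trans. apply abs_RInt_le; auto.
  apply Rle_trans with (RInt (fun x => k * exp (- c * x)) a b).
  - apply RInt_le; auto.
    + apply exRc; auto. intros x hx. apply cabs. apply cminus; apply cont_psiZ; auto.
    + apply ex_RInt_scalR. apply exRc; auto. intros; apply cont_exp_lin.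
    + intros x hx. apply E. lra.
  - rewrite RInt_scalR by (apply exRc; auto; intros; apply cont_exp_lin).
    apply Rmult_le_compat_l; auto. apply int_exp_bound; auto.
Qed.

Lemma hZ_cont c g0 : 0 < c -> 0 < g0 -> continuous (hZ c) g0.
Proof.
  intros hc hg0. apply continuity_pt_filterlim.
  unfold continuity_pt, continue_in, limit1_in, limit_in. simpl. unfold R_dist.
  intros eps he.
  set (d := Rmin g0 (g0 * (eps * c / 2) ^ 2)).
  assert (hd : 0 < d).
  { apply Rmin_pos; auto. apply Rmult_lt_0_compat; auto. apply pow_lt. nra. }
  exists d. split; auto.
  intros g [_ hg].
  assert (dl : d <= g0) by apply Rmin_l. assert (dr : d <= g0 * (eps * c / 2) ^ 2) by apply Rmin_r.
  assert (0 < g) by (apply Rabs_def2 in hg; destruct hg; lra).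
  eapply Rle_lt_trans. apply hZ_diff; auto.
  assert (sqrt (Rabs (g - g0) / g0) < eps * c).
  { apply Rle_lt_trans with (sqrt ((eps * c / 2) ^ 2)).
    - apply sqrt_le_1_alt. apply (Rmult_le_reg_r g0); auto. field_simplify; try lra.
    - rewrite sqrt_pow2 by nra. nra. }
  apply (Rmult_lt_reg_r c); auto. rewrite Rmult_assoc, Rinv_l by lra. lra.
Qed.

Lemma phi_exists a b : 0 < a -> 0 <= b -> exists L, ImpI (phi a b) L /\ 0 < L.
Proof.
  intros ha hb.
  assert (Hle : forall t, 0 < t -> 0 < phi a b t <= / sqrt t * exp (- a * t)).
  { intros t ht. unfold phi. pose proof (sqrt_lt_R0 t ht).
    assert (0 < / sqrt t) by (apply Rinv_0_lt_compat; auto).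
    split. apply Rmult_lt_0_compat; auto; apply exp_pos.
    apply Rmult_le_compat_l; [lra|].
    assert (0 <= b / t) by (apply Rmult_le_pos; [lra| left; apply Rinv_0_lt_compat; lra]).
    destruct (Req_dec (b / t) 0) as [e|n]. rewrite e. right; f_equal; ring.
    left; apply exp_increasing. lra. }
  destruct (ImpI_exists (phi a b) (PI / sqrt a)) as (l & Hl & Hb & Hlow).
  - intros; apply cont_phi; auto.
  - intros; left; apply Hle; auto.
  - intros a0 b0 ha0 hab. eapply Rle_trans; [|apply (int_isqrt_exp_bound a a0 b0); auto].
    apply RInt_le; auto.
    + apply exRc; auto. intros; apply cont_phi; auto.
    + apply exRc; auto. intros; apply cont_isqrt_exp; auto.
    + intros x hx. apply Hle; lra.
  - exists l. split; auto.
    eapply Rlt_le_trans; [|apply (Hlow 1 2); lra].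
    apply RInt_gt_0. lra. intros; apply Hle; lra. intros; apply cont_phi; lra.
Qed.

Lemma phi_full a : 0 < a -> exists K, 0 < K /\
  forall b, 0 <= b -> ImpI (phi a b) (exp (- 2 * (sqrt a * sqrt b)) * K).
Proof.
  intros ha. destruct (phi_exists a 0 ha (Rle_refl _)) as (K & HK & hK).
  exists K. split; auto. intros b hb.
  destruct (phi_exists a b ha hb) as (L & HL & _).
  rewrite <- (phi_value a b K L); auto.
Qed.

Lemma perjZ t u : 0 < t -> 0 < u -> / sqrt u * / sqrt (/ u + / t) = sqrt (t / (t + u)).
Proof.
  intros ht hu.
  replace (/ u + / t) with ((t + u) / (u * t)) by (field; lra).
  rewrite !sqrt_div_alt by nra. rewrite sqrt_mult_alt by lra.
  pose proof (sqrt_lt_R0 t ht). pose proof (sqrt_lt_R0 u hu).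
  assert (0 < sqrt (t + u)) by (apply sqrt_lt_R0; lra).
  field. lra.
Qed.

Lemma perjM s2 c bt t u : 0 < s2 -> 0 < t -> 0 < u ->
  / sqrt (2 * PI * s2 * / (/ u + / t)) * exp (- (bt ^ 2) / (2 * s2 * / (/ u + / t)))
  * psiZ c t u
  = / sqrt (2 * PI * s2) * exp (- / t * (bt ^ 2 / (2 * s2))) * phi c (bt ^ 2 / (2 * s2)) u.
Proof.
  intros hs ht hu. unfold psiZ, phi. rewrite <- (perjZ t u) by auto.
  assert (hw : 0 < / u + / t) by (pose proof (Rinv_0_lt_compat u hu); pose proof (Rinv_0_lt_compat t ht); lra).
  set (w := / u + / t) in *.
  pose proof PI_RGT_0.
  assert (0 < 2 * PI * s2) by nra.
  rewrite sqrt_mult_alt by lra. rewrite sqrt_inv.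
  replace (- (bt ^ 2) / (2 * s2 * / w)) with ((- / t * (bt ^ 2 / (2 * s2))) + (- (bt ^ 2 / (2 * s2)) / u))
    by (unfold w; field; repeat split; lra).
  replace (- c * u - bt ^ 2 / (2 * s2) / u) with ((- (bt ^ 2 / (2 * s2)) / u) + - c * u) by (field; lra).
  rewrite !exp_plus.
  pose proof (sqrt_lt_R0 _ H0). pose proof (sqrt_lt_R0 _ hw). pose proof (sqrt_lt_R0 _ hu).
  field. repeat split; lra.
Qed.

Lemma exp_sum_split m k1 k2 f t :
  exp (- k1 * sumR m f - k2 * t) = prodR m (fun j => exp (- k1 * f j)) * exp (- k2 * t).
Proof.
  rewrite prodR_exp. rewrite <- exp_plus. f_equal.
  rewrite sumR_scal. ring.
Qed.

Lemma priorZ_eq m l1 l2 t xs : 0 < t -> length xs = m -> Forall (fun x => 0 < x) xs ->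
  prior_unnorm m l1 l2 (t :: xs) =
  (/ sqrt t * exp (- (l2 ^ 2 / 2) * t)) * prodR m (fun j => psiZ (l1 ^ 2 / 2) t (nth j xs 0)).
Proof.
  intros ht hl hf. unfold prior_unnorm, tau2, gam2. cbn [nth].
  replace (- (l1 ^ 2 / 2) * sumR m (fun j => nth j xs 0) - l2 ^ 2 / 2 * t) with
    (- (l1 ^ 2 / 2) * sumR m (fun j => nth j xs 0) - (l2 ^ 2 / 2) * t) by ring.
  rewrite exp_sum_split.
  rewrite (prodR_ext_lt m (fun j => psiZ (l1 ^ 2 / 2) t (nth j xs 0))
     (fun j => (/ sqrt (nth j xs 0) * / sqrt (/ nth j xs 0 + / t)) * exp (- (l1 ^ 2 / 2) * nth j xs 0))).
  - rewrite (prodR_mult m (fun j => / sqrt (nth j xs 0) * / sqrt (/ nth j xs 0 + / t))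
       (fun j => exp (- (l1 ^ 2 / 2) * nth j xs 0))).
    replace (- (l2 ^ 2 / 2) * t) with (- (l2 ^ 2 / 2 * t)) by field. ring.
  - intros j hj. unfold psiZ. rewrite perjZ; auto. apply nth_pos; auto. rewrite hl; exact hj.
Qed.

Lemma marg_eq m sigma l1 l2 beta Z t xs : 0 < sigma -> 0 < t -> length xs = m ->
  Forall (fun x => 0 < x) xs ->
  normal_dens m sigma beta (t :: xs) * (/ Z * prior_unnorm m l1 l2 (t :: xs)) =
  (/ Z * (/ sqrt (2 * PI * sigma ^ 2)) ^ m *
     phi (l2 ^ 2 / 2) (sumR m (fun j => beta j ^ 2 / (2 * sigma ^ 2))) t) *
  prodR m (fun j => phi (l1 ^ 2 / 2) (beta j ^ 2 / (2 * sigma ^ 2)) (nth j xs 0)).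
Proof.
  intros hs ht hl hf.
  rewrite priorZ_eq by auto.
  unfold normal_dens, vdiag, tau2, gam2. cbn [nth].
  set (s := / sqrt (2 * PI * sigma ^ 2)).
  set (B := sumR m (fun j => beta j ^ 2 / (2 * sigma ^ 2))).
  set (N := fun j => / sqrt (2 * PI * sigma ^ 2 * / (/ nth j xs 0 + / t)) *
       exp (- beta j ^ 2 / (2 * sigma ^ 2 * / (/ nth j xs 0 + / t)))).
  set (P := fun j => psiZ (l1 ^ 2 / 2) t (nth j xs 0)).
  set (F := fun j => phi (l1 ^ 2 / 2) (beta j ^ 2 / (2 * sigma ^ 2)) (nth j xs 0)).
  change (prodR m (fun j => / sqrt (2 * PI * sigma ^ 2 * / (/ nth j xs 0 + / t)) *
       exp (- beta j ^ 2 / (2 * sigma ^ 2 * / (/ nth j xs 0 + / t))))) with (prodR m N).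
  change (prodR m (fun j => psiZ (l1 ^ 2 / 2) t (nth j xs 0))) with (prodR m P).
  change (prodR m (fun j => phi (l1 ^ 2 / 2) (beta j ^ 2 / (2 * sigma ^ 2)) (nth j xs 0))) with (prodR m F).
  assert (E1 : prodR m N * prodR m P = s ^ m * exp (- / t * B) * prodR m F).
  { rewrite <- prodR_mult.
    rewrite (prodR_ext_lt m _ (fun j => (s * exp (- / t * (beta j ^ 2 / (2 * sigma ^ 2)))) * F j)).
    - rewrite prodR_mult, prodR_mult, prodR_const, prodR_exp. f_equal. f_equal. f_equal.
      unfold B. rewrite <- sumR_scal. reflexivity.
    - intros j hj. unfold N, P, F, s. apply perjM; auto. apply pow_lt; auto.
      apply nth_pos; auto. rewrite hl; exact hj. }
  assert (E2 : phi (l2 ^ 2 / 2) B t = / sqrt t * exp (- (l2 ^ 2 / 2) * t) * exp (- / t * B)).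
  { unfold phi. rewrite Rmult_assoc, <- exp_plus. f_equal. f_equal. field. lra. }
  rewrite E2.
  transitivity (/ Z * (/ sqrt t * exp (- (l2 ^ 2 / 2) * t)) * (prodR m N * prodR m P)).
  ring. rewrite E1. ring.
Qed.

Lemma sq_lemma l sigma y : 0 < l -> 0 < sigma -> 0 <= y ->
  - 2 * (sqrt (l ^ 2 / 2) * sqrt (y / (2 * sigma ^ 2))) = - (l / sigma) * sqrt y.
Proof.
  intros hl hs hy.
  rewrite <- sqrt_mult_alt.
  2:{ apply Rmult_le_pos. apply pow_le; lra. lra. }
  replace (l ^ 2 / 2 * (y / (2 * sigma ^ 2))) with ((l / (2 * sigma)) ^ 2 * y) by (field; lra).
  rewrite sqrt_mult_alt by (apply pow_le; left; apply Rdiv_lt_0_compat; lra).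
  rewrite sqrt_pow2 by (left; apply Rdiv_lt_0_compat; lra).
  field. lra.
Qed.

Lemma sqrt_sq_abs x : sqrt (x ^ 2) = Rabs x.
Proof. rewrite <- pow2_abs. apply sqrt_pow2. apply Rabs_pos. Qed.

Lemma sumR_nonneg m f : (forall j, 0 <= f j) -> 0 <= sumR m f.
Proof. induction m; simpl; intros H. lra. pose proof (H m). pose proof (IHm H). lra. Qed.

Lemma cpow (f : R -> R) (n : nat) (x : R) : continuous f x -> continuous (fun t => f t ^ n) x.
Proof.
  intros H. apply (continuous_comp f (fun y => y ^ n)); auto.
  apply cder. auto_derive. auto.
Qed.

Theorem mainTheorem6 (m : nat) (sigma l1 l2 : R)
  (hm : (1 <= m)%nat) (hsigma : 0 < sigma) (hl1 : 0 < l1) (hl2 : 0 < l2) :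
  exists Z : R, 0 < Z /\ IterInt (S m) (prior_unnorm m l1 l2) Z /\
  exists C : R, 0 < C /\
    forall beta : nat -> R,
      IterInt (S m)
        (fun xs => normal_dens m sigma beta xs * (/ Z * prior_unnorm m l1 l2 xs))
        (C * exp (- (l1 / sigma) * norm1 m beta - (l2 / sigma) * norm2 m beta)).
Proof.
  set (c1 := l1 ^ 2 / 2). set (c2 := l2 ^ 2 / 2).
  assert (hc1 : 0 < c1) by (unfold c1; apply Rdiv_lt_0_compat; [apply pow_lt|]; lra).
  assert (hc2 : 0 < c2) by (unfold c2; apply Rdiv_lt_0_compat; [apply pow_lt|]; lra).
  set (GZ := fun t => / sqrt t * exp (- c2 * t) * hZ c1 t ^ m).
  assert (GZc : forall t, 0 < t -> continuous GZ t).
  { intros t ht. unfold GZ. apply cmult. apply cont_isqrt_exp; auto.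
    apply cpow. apply hZ_cont; auto. }
  assert (GZpos : forall t, 0 < t -> 0 < GZ t).
  { intros t ht. unfold GZ. destruct (hZ_spec c1 t hc1 ht) as [_ [h1 _]].
    pose proof (sqrt_lt_R0 t ht).
    apply Rmult_lt_0_compat. apply Rmult_lt_0_compat. apply Rinv_0_lt_compat; auto.
    apply exp_pos. apply pow_lt; auto. }
  destruct (ImpI_exists GZ ((/ c1) ^ m * (PI / sqrt c2))) as (Z & HZ & _ & HZlow).
  - auto.
  - intros; left; auto.
  - intros a b ha hab.
    apply Rle_trans with (RInt (fun t => (/ c1) ^ m * (/ sqrt t * exp (- c2 * t))) a b).
    + apply RInt_le; auto.
      * apply exRc; auto.
      * apply ex_RInt_scalR. apply exRc; auto. intros; apply cont_isqrt_exp; auto.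
      * intros x hx. assert (0 < x) by lra. unfold GZ.
        destruct (hZ_spec c1 x hc1 H) as [_ [h1 h2]].
        pose proof (sqrt_lt_R0 x H).
        assert (0 < / sqrt x * exp (- c2 * x)).
        { apply Rmult_lt_0_compat. apply Rinv_0_lt_compat; auto. apply exp_pos. }
        rewrite Rmult_comm. apply Rmult_le_compat_r. lra.
        apply pow_incr. lra.
    + rewrite RInt_scalR by (apply exRc; auto; intros; apply cont_isqrt_exp; auto).
      apply Rmult_le_compat_l. apply pow_le. left; apply Rinv_0_lt_compat; auto.
      apply int_isqrt_exp_bound; auto.
  - assert (hZ0 : 0 < Z).
    { eapply Rlt_le_trans; [|apply (HZlow 1 2); lra].
      apply RInt_gt_0. lra. intros; apply GZpos; lra. intros; apply GZc; lra. }
    exists Z. split; [auto|split].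
    +
      exists GZ. split. apply ImpI_ImpInt; auto.
      intros t ht.
      destruct (hZ_spec c1 t hc1 ht) as [Hh _].
      pose proof (IterInt_prod m (fun _ => psiZ c1 t) (fun _ => hZ c1 t)
         (/ sqrt t * exp (- c2 * t)) (fun _ => Hh)) as HI.
      rewrite prodR_const in HI.
      apply (IterInt_ext m _ _ _ HI).
      intros xs hl hf. rewrite priorZ_eq by auto. reflexivity.
    + destruct (phi_full c1 hc1) as (K1 & hK1 & HK1).
      destruct (phi_full c2 hc2) as (K2 & hK2 & HK2).
      set (s := / sqrt (2 * PI * sigma ^ 2)).
      assert (hs : 0 < s).
      { unfold s. apply Rinv_0_lt_compat. apply sqrt_lt_R0. pose proof PI_RGT_0.
        pose proof (pow_lt sigma 2 hsigma). nra. }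
      exists (/ Z * s ^ m * K1 ^ m * K2). split.
      { repeat apply Rmult_lt_0_compat; try apply pow_lt; auto. apply Rinv_0_lt_compat; auto. }
      intros beta.
      set (b := fun j => beta j ^ 2 / (2 * sigma ^ 2)).
      assert (hb : forall j, 0 <= b j).
      { intros j. unfold b. apply Rmult_le_pos. apply pow2_ge_0.
        left; apply Rinv_0_lt_compat. pose proof (pow_lt sigma 2 hsigma). lra. }
      set (B := sumR m b).
      assert (hB : 0 <= B) by (apply sumR_nonneg; auto).
      set (P := prodR m (fun j => exp (- 2 * (sqrt c1 * sqrt (b j))) * K1)).
      set (G := fun t => (/ Z * s ^ m * P) * phi c2 B t).
      assert (HG : ImpI G ((/ Z * s ^ m * P) * (exp (- 2 * (sqrt c2 * sqrt B)) * K2))).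
      { apply ImpI_scal. apply HK2; auto. }
      replace (/ Z * s ^ m * K1 ^ m * K2 *
               exp (- (l1 / sigma) * norm1 m beta - l2 / sigma * norm2 m beta))
        with ((/ Z * s ^ m * P) * (exp (- 2 * (sqrt c2 * sqrt B)) * K2)).
      * exists G. split. apply ImpI_ImpInt; auto.
        intros t ht.
        pose proof (IterInt_prod m (fun j => phi c1 (b j))
           (fun j => exp (- 2 * (sqrt c1 * sqrt (b j))) * K1)
           (/ Z * s ^ m * phi c2 B t) (fun j => HK1 (b j) (hb j))) as HI.
        replace (G t) with (/ Z * s ^ m * phi c2 B t * P) by (unfold G; ring).
        apply (IterInt_ext m _ _ _ HI).
        -- intros xs hl hf. rewrite marg_eq by auto. reflexivity.
      * unfold P. rewrite prodR_mult, prodR_const, prodR_exp.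
        assert (E1 : sumR m (fun j => - 2 * (sqrt c1 * sqrt (b j))) = - (l1 / sigma) * norm1 m beta).
        { unfold norm1. rewrite <- sumR_scal. apply sumR_ext_lt. intros j _.
          unfold c1, b. rewrite sq_lemma by (auto; apply pow2_ge_0). rewrite sqrt_sq_abs. reflexivity. }
        assert (E2 : - 2 * (sqrt c2 * sqrt B) = - (l2 / sigma) * norm2 m beta).
        { unfold norm2, B, b, c2.
          replace (sumR m (fun j => beta j ^ 2 / (2 * sigma ^ 2))) with
            (sumR m (fun j => beta j ^ 2) / (2 * sigma ^ 2)).
          apply sq_lemma; auto. apply sumR_nonneg. intros; apply pow2_ge_0.
          unfold Rdiv. rewrite Rmult_comm, <- sumR_scal. apply sumR_ext_lt. intros; ring. }
        rewrite E1.
        replace (- 2 * (sqrt c2 * sqrt B)) with (- (l2 / sigma) * norm2 m beta) by (symmetry; exact E2).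
        replace (- (l1 / sigma) * norm1 m beta - l2 / sigma * norm2 m beta) with
          (- (l1 / sigma) * norm1 m beta + - (l2 / sigma) * norm2 m beta) by ring.
        rewrite exp_plus. ring.
Qed.
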